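(* Let $\overline{F}(x) = 1$ for $x < 0$ and $\overline{F}(x) = (\lfloor x \rfloor + 2)^{-1}$ for $x \geq 0$, and let $\theta \in (0,1)$. Then $\theta\, \overline{F}(x) \leq \overline{F}(x/\theta)$ holds for all $x \geq 0$ if and only if $$\theta \in \mathcal{A} := \left(0, \tfrac{1}{2}\right] \cup \left\{ \tfrac{k+1}{2k+1} : k \in \{1,2,3,\dots\} \right\}.$$ *)

(* Defs.v *)
From Stdlib Require Import Reals.
Open Scope R_scope.

(* floor x : the greatest integer <= x (Stdlib's Int_part x = up x - 1). *)
Definition floorR (x : R) : Z := Int_part x.

Definition Fbar (x : R) : R :=
  if Rlt_dec x 0 then 1 else / (IZR (floorR x) + 2).

Definition setA (theta : R) : Prop :=
  (0 < theta <= 1/2) \/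
  (exists k : nat, (1 <= k)%nat /\ theta = (INR k + 1) / (2 * INR k + 1)).

(* Main.v *)
Require Import Defs.
From Stdlib Require Import Reals.
From Stdlib Require Import Lra Lia ZArith.
Open Scope R_scope.

Lemma frac_le (t A B : R) : 0 < A -> 0 < B -> t * B <= A -> t * / A <= / B.
Proof.
  intros HA HB H.
  replace (t * / A) with ((t * B) * (/ A * / B)) by (field; lra).
  replace (/ B) with (A * (/ A * / B)) at 2 by (field; lra).
  apply Rmult_le_compat_r; [|exact H].
  apply Rlt_le, Rmult_lt_0_compat; apply Rinv_0_lt_compat; lra.
Qed.

Lemma frac_lt (t A B : R) : 0 < A -> 0 < B -> A < t * B -> / B < t * / A.
Proof.
  intros HA HB H.
  replace (t * / A) with ((t * B) * (/ A * / B)) by (field; lra).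
  replace (/ B) with (A * (/ A * / B)) at 1 by (field; lra).
  apply Rmult_lt_compat_r; [|exact H].
  apply Rmult_lt_0_compat; apply Rinv_0_lt_compat; lra.
Qed.

Lemma Fbar_pos (x : R) : 0 <= x -> Fbar x = / (IZR (floorR x) + 2) /\
   IZR (floorR x) <= x /\ x < IZR (floorR x) + 1 /\ 0 < IZR (floorR x) + 2.
Proof.
  intros Hx. unfold Fbar. destruct (Rlt_dec x 0); [lra|].
  pose proof (base_Int_part x). unfold floorR. lra.
Qed.

Theorem lemma13 (theta : R) (Htheta : 0 < theta < 1) :
  (forall x : R, 0 <= x -> theta * Fbar x <= Fbar (x / theta)) <-> setA theta.
Proof.
  split.
  - intros H.
    destruct (Rle_dec theta (1/2)) as [Hle|Hgt]; [left; lra|].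
    right.
    set (s := (1 - theta) / (2 * theta - 1)).
    assert (Hs : 0 < s) by (unfold s; apply Rdiv_lt_0_compat; lra).
    pose proof (base_Int_part s) as [B1 B2].
    set (n := Int_part s) in *.
    assert (Hn0 : (0 <= n)%Z).
    { assert (-1 < IZR n) by lra. apply lt_IZR in H0. lia. }
    assert (Hsn1 : 1 - theta < (IZR n + 1) * (2 * theta - 1)).
    { assert (s < IZR n + 1) by lra. unfold s in H0.
      apply (Rmult_lt_compat_r (2*theta-1)) in H0; [|lra].
      unfold Rdiv in H0. rewrite Rmult_assoc, Rinv_l in H0; lra. }
    destruct (Rle_lt_or_eq_dec _ _ B1) as [Hlt|Heq].
    + exfalso.
      assert (Hsn : IZR n * (2 * theta - 1) < 1 - theta).
      { unfold s in Hlt.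
        apply (Rmult_lt_compat_r (2*theta-1)) in Hlt; [|lra].
        unfold Rdiv in Hlt. rewrite Rmult_assoc, Rinv_l in Hlt; lra. }
      set (x := theta * (2 * IZR n + 1)).
      assert (Hn0' : 0 <= IZR n) by (apply IZR_le; lia).
      assert (Hx : 0 <= x) by (unfold x; nra).
      specialize (H x Hx).
      destruct (Fbar_pos x Hx) as [F1 [F2 [F3 F4]]].
      assert (Hxt : x / theta = IZR (2 * n + 1)).
      { unfold x. rewrite plus_IZR, mult_IZR. field. lra. }
      assert (Hxt0 : 0 <= x / theta) by (rewrite Hxt; apply IZR_le; lia).
      destruct (Fbar_pos (x / theta) Hxt0) as [G1 _].
      assert (Hfl : floorR (x / theta) = (2 * n + 1)%Z).
      { unfold floorR. rewrite Hxt. symmetry. apply Int_part_spec. lra. }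
      rewrite F1, G1, Hfl in H.
      assert (Hfx : (floorR x <= n)%Z).
      { assert (x < IZR n + 1) by (unfold x; nra).
        assert (IZR (floorR x) < IZR (n + 1)) by (rewrite plus_IZR; lra).
        apply lt_IZR in H1. lia. }
      apply IZR_le in Hfx.
      assert (/ (IZR (2 * n + 1) + 2) < theta * / (IZR (floorR x) + 2)).
      { apply frac_lt; [lra| rewrite plus_IZR, mult_IZR; lra |].
        rewrite plus_IZR, mult_IZR. nra. }
      lra.
    + exists (Z.to_nat n).
      assert (Hk : INR (Z.to_nat n) = IZR n).
      { rewrite INR_IZR_INZ, Z2Nat.id; auto. }
      rewrite Hk.
      assert (Heq' : IZR n * (2 * theta - 1) = 1 - theta).
      { rewrite Heq. unfold s. field. lra. }
      split.
      * destruct (Z.eq_dec n 0) as [E|E].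
        -- subst n. rewrite E in Heq'. lra.
        -- lia.
      * assert (0 <= IZR n) by (apply IZR_le; lia).
        field_simplify_eq; [lra| lra].
  - intros HA x Hx.
    assert (Hxt0 : 0 <= x / theta) by (unfold Rdiv; apply Rmult_le_pos; [lra | apply Rlt_le, Rinv_0_lt_compat; lra]).
    destruct (Fbar_pos x Hx) as [F1 [F2 [F3 F4]]].
    destruct (Fbar_pos (x / theta) Hxt0) as [G1 [G2 [G3 G4]]].
    rewrite F1, G1. apply frac_le; try lra.
    set (a := floorR (x / theta)) in *.
    set (b := floorR x) in *.
    assert (Hta : theta * IZR a <= x).
    { apply (Rmult_le_compat_l theta) in G2; [|lra].
      replace (theta * (x / theta)) with x in G2 by (field; lra). exact G2. }
    destruct HA as [HA|[k [Hk Ht]]].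
    + nra.
    + rewrite INR_IZR_INZ in Ht. set (z := Z.of_nat k) in *.
      assert (Hz : (1 <= z)%Z) by (unfold z; lia).
      assert (Hz' : 1 <= IZR z) by (apply IZR_le; lia).
      rewrite Ht in Hta |- *.
      assert (Hlt : (IZR z + 1) * IZR a < (2 * IZR z + 1) * (IZR b + 1)).
      { assert (HH : (IZR z + 1) / (2 * IZR z + 1) * IZR a < IZR b + 1) by lra.
        apply (Rmult_lt_compat_l (2 * IZR z + 1)) in HH; [|lra].
        replace ((2 * IZR z + 1) * ((IZR z + 1) / (2 * IZR z + 1) * IZR a))
          with ((IZR z + 1) * IZR a) in HH by (field; lra). lra. }
      assert (HZ : ((z + 1) * a < (2 * z + 1) * (b + 1))%Z).
      { apply lt_IZR. rewrite !mult_IZR, !plus_IZR, !mult_IZR. exact Hlt. }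
      assert (HZ2 : ((z + 1) * (a + 2) <= (2 * z + 1) * (b + 2))%Z) by lia.
      apply IZR_le in HZ2. rewrite !mult_IZR, !plus_IZR, !mult_IZR in HZ2.
      apply (Rmult_le_reg_l (2 * IZR z + 1)); [lra|].
      replace ((2 * IZR z + 1) * ((IZR z + 1) / (2 * IZR z + 1) * (IZR a + 2)))
        with ((IZR z + 1) * (IZR a + 2)) by (field; lra).
      lra.
Qed.
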